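(* Let $L$ be a BZ--lattice whose $0$ is meet--irreducible (equivalently, whose $1$ is join--irreducible). Then $L$ is an antiortholattice, i.e. $\{a\in L: a\wedge a'=0\}=\{0,1\}$ and the Brouwer complement of $L$ is the trivial one ($0^\sim=1$ and $a^\sim=0$ for all $a\in L\setminus\{0\}$). In particular, every BZ--lattice whose lattice reduct is a chain is an antiortholattice.
   Context: A pseudo--Kleene algebra is a bounded lattice with a unary operation $'$ satisfying $a''=a$, $a\leq b\Rightarrow b'\leq a'$, and $a\wedge a'\leq b\vee b'$ for all $a,b$. A BZ--lattice is an algebra $(L,\vee,\wedge,',{}^\sim,0,1)$ where $(L,\vee,\wedge,',0,1)$ is a pseudo--Kleene algebra and ${}^\sim$ (the Brouwer complement) satisfies, for all $a,b$: $a\wedge a^\sim=0$, $a\leq a^{\sim\sim}$, $a^{\sim\prime}=a^{\sim\sim}$, and $a\leq b\Rightarrow b^\sim\leq a^\sim$. ''$0$ meet--irreducible'' means $a\wedge b=0$ implies $a=0$ or $b=0$. An antiortholattice is a pseudo--Kleene algebra with $\{a: a\wedge a'=0\}=\{0,1\}$, equipped with the trivial Brouwer complement. *)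

(* Defs.v *)
From HB Require Import structures.
From mathcomp Require Import all_boot all_order.
Set Implicit Arguments. Unset Strict Implicit. Unset Printing Implicit Defensive.
Import Order.TTheory.
Local Open Scope order_scope.

(* Pseudo-Kleene algebra on a bounded lattice L with unary operation c = ' *)
Definition pseudo_kleene (d : Order.disp_t) (L : tbLatticeType d) (c : L -> L) : Prop :=
  [/\ (forall a, c (c a) = a),
      (forall a b, a <= b -> c b <= c a) &
      (forall a b, a `&` c a <= b `|` c b)].

(* BZ-lattice: pseudo-Kleene algebra with a Brouwer complement bz = ~ *)
Definition BZ_lattice (d : Order.disp_t) (L : tbLatticeType d) (c bz : L -> L) : Prop :=
  [/\ pseudo_kleene c,
      (forall a, a `&` bz a = \bot),
      (forall a, a <= bz (bz a)),
      (forall a, c (bz a) = bz (bz a)) &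
      (forall a b, a <= b -> bz b <= bz a)].

Definition zero_meet_irreducible (d : Order.disp_t) (L : tbLatticeType d) : Prop :=
  forall a b : L, a `&` b = \bot -> a = \bot \/ b = \bot.

Definition antiortholattice (d : Order.disp_t) (L : tbLatticeType d) (c bz : L -> L) : Prop :=
  [/\ pseudo_kleene c,
      (forall a : L, a `&` c a = \bot <-> (a = \bot \/ a = \top)),
      bz \bot = \top &
      (forall a : L, a <> \bot -> bz a = \bot)].

Definition is_chain (d : Order.disp_t) (L : tbLatticeType d) : Prop :=
  forall a b : L, a <= b \/ b <= a.

(* Main.v *)
Require Import Defs.
From HB Require Import structures.
From mathcomp Require Import all_boot all_order.
Import Order.TTheory.
Local Open Scope order_scope.

Lemma part1 (d : Order.disp_t) (L : tbLatticeType d) (c bz : L -> L) :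
  BZ_lattice c bz -> zero_meet_irreducible L -> antiortholattice c bz.
Proof.
move=> [[cc canti ck] bzm bzbb cbz banti] zi.
have c0 : c \bot = \top.
  apply/eqP; rewrite eq_le lex1 /=.
  by rewrite -{1}(cc \top); apply: canti; rewrite le0x.
have c1 : c \top = \bot by rewrite -c0 cc.
have bt : bz \top = \bot.
  case: (zi _ _ (bzm \top)) => // h.
  by apply/eqP; rewrite eq_le le0x andbT; have := lex1 (bz \top); rewrite h.
split=> //.
- move=> a; split.
  + move=> /zi [->|h]; [by left|right].
    by rewrite -(cc a) h c0.
  + by case=> ->; [rewrite meet0x | rewrite c1 meetx0].
- apply/eqP; rewrite eq_le lex1 /=.
  by have := bzbb \top; rewrite bt.
- move=> a na; case: (zi _ _ (bzm a)) => // .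
Qed.

Theorem lemma3p3 :
  (forall (d : Order.disp_t) (L : tbLatticeType d) (c bz : L -> L),
      BZ_lattice c bz -> zero_meet_irreducible L -> antiortholattice c bz) /\
  (forall (d : Order.disp_t) (L : tbLatticeType d) (c bz : L -> L),
      BZ_lattice c bz -> is_chain L -> antiortholattice c bz).
Proof.
split; first exact: part1.
move=> d L c bz H ch; apply: part1 => // a b.
case: (ch a b) => h; [move/meet_idPl: h => -> | move/meet_idPr: h => ->]; by [left|right].
Qed.
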